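(* In the setting of the addition algorithm, the maps $T^+:\mathbb{R}^V\to\mathbb{R}^V$ and $T^-:\mathbb{R}^V\to\mathbb{R}^V$ are one-to-one and onto. Moreover $T^-(\varphi)=-T^+(-\varphi)$ for all $\varphi\in\mathbb{R}^V$.
   Context: Addition algorithm. Let $G=(V,E)$ be a finite connected graph ($v\sim w$ means $(v,w)\in E$), $\tau:V\to[0,\infty)$, $0<\varepsilon\le1/2$, and fix a total order $\preceq$ on $V$. Let $f:\mathbb{R}\to\mathbb{R}$ be $f(x)=0$ for $|x|\ge1$, $f(x)=(1+x)/\varepsilon$ on $[-1,-1+\varepsilon]$, $f(x)=1$ on $[-1+\varepsilon,1-\varepsilon]$, $f(x)=(1-x)/\varepsilon$ on $[1-\varepsilon,1]$. For $v\in V$, $h,t\in\mathbb{R}$ let $m_{v,h,t}(h')=\min(\tau(v)-t,\varepsilon/2)f(h'-h)+t$ if $\tau(v)\ge t$, and $m_{v,h,t}(h')=t$ if $\tau(v)<t$. On input $\varphi\in\mathbb{R}^V$ the algorithm outputs an ordering $P_1,\dots,P_{|V|}$ of $V$, numbers $s_k$ and functions $\tau_k:V\times\mathbb{R}\to\mathbb{R}$: set $\tau_1(v,h)=\tau(v)$; for $k=1,\dots,|V|$: let $P_k$ be the vertex $v\in V\setminus\{P_1,\dots,P_{k-1}\}$ minimizing $\tau_k(v,\varphi_v)$ (ties broken by taking the $\preceq$-smallest); set $s_k=\tau_k(P_k,\varphi_{P_k})$; if $k<|V|$ set $\tau_{k+1}(v,h)=\tau_k(v,h)$ if $v\in\{P_1,\dots,P_k\}$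 or $v\not\sim P_k$, and $\tau_{k+1}(v,h)=\min(\tau_k(v,h),m_{v,\varphi_{P_k},s_k}(h))$ otherwise. Define $T^+(\varphi)_{P_k}=\varphi_{P_k}+s_k$ ($1\le k\le|V|$) and $T^-(\varphi)=2\varphi-T^+(\varphi)$. *)

(* Defs.v *)
From mathcomp Require Import all_boot.
From Stdlib Require Import Reals.
Set Implicit Arguments. Unset Strict Implicit. Unset Printing Implicit Defensive.

Local Open Scope R_scope.

Definition Rltb (a b : R) : bool := if Rlt_dec a b then true else false.
Definition Reqb (a b : R) : bool := if Req_EM_T a b then true else false.

Definition fA (eps x : R) : R :=
  if Rle_dec 1 (Rabs x) then 0
  else if Rle_dec x (-1 + eps) then (1 + x) / eps
  else if Rle_dec x (1 - eps) then 1
  else (1 - x) / eps.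

Definition mA (V : Type) (tau : V -> R) (eps : R) (v : V) (h t h' : R) : R :=
  if Rle_dec t (tau v) then Rmin (tau v - t) (eps / 2) * fA eps (h' - h) + t
  else t.

(* State of the algorithm after k steps:
   placed = [P_1; ...; P_k] (in reverse order of placement),
   taus   = tau_{k+1},
   sv     = the function P_j |-> s_j on placed vertices (0 elsewhere). *)
Record stateA (V : finType) := StateA {
  placed : seq V;
  taus : V -> R -> R;
  sv : V -> R
}.

Section Alg.
Variables (V : finType) (adj : rel V) (tau : V -> R) (eps : R) (le : rel V)
          (phi : V -> R).

Definition is_next (st : stateA V) (v : V) : bool :=
  (v \notin placed st) &&
  [forall w, (w \notin placed st) ==>
     (Rltb (taus st v (phi v)) (taus st w (phi w))
      || (Reqb (taus st v (phi v)) (taus st w (phi w)) && le v w))].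

Definition stepA (st : stateA V) : stateA V :=
  match [pick v | is_next st v] with
  | None => st
  | Some p =>
      let s := taus st p (phi p) in
      let pl := p :: placed st in
      StateA pl
        (fun v h => if (v \in pl) || ~~ adj v p then taus st v h
                    else Rmin (taus st v h) (mA tau eps v (phi p) s h))
        (fun w => if w == p then s else sv st w)
  end.

Definition initA : stateA V := StateA [::] (fun v _ => tau v) (fun _ => 0).

Definition runA : stateA V := iter #|V| stepA initA.

End Alg.

Definition Tplus (V : finType) (adj : rel V) (tau : V -> R) (eps : R) (le : rel V)
  (phi : V -> R) : V -> R :=
  fun v => phi v + sv (runA adj tau eps le phi) v.

Definition Tminus (V : finType) (adj : rel V) (tau : V -> R) (eps : R) (le : rel V)
  (phi : V -> R) : V -> R :=
  fun v => 2 * phi v - Tplus adj tau eps le phi v.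

(* Main.v *)
Require Import Defs.
From mathcomp Require Import all_boot.
From Stdlib Require Import Reals Lra ClassicalEpsilon FunctionalExtensionality.
Set Implicit Arguments. Unset Strict Implicit.
Local Open Scope R_scope.

Lemma fA_ef eps x : 0 < eps -> eps <= 1/2 ->
  fA eps x = Rmax 0 (Rmin eps (1 - Rabs x)) / eps.
Proof.
intros he hl; unfold fA, Rmax, Rmin, Rabs.
repeat destruct Rle_dec; repeat destruct Rcase_abs; simpl; try (exfalso; lra).
all: try (field; lra).
all: try (replace (1 - - x) with (1 + x) by ring; field; lra).
all: try (assert (Hx: x = -1) by lra; subst x; field; lra).
all: try (assert (Hx: x = 1) by lra; subst x; field; lra).
all: try (assert (Hx: x = -1+eps) by lra; subst x; field; lra).
Qed.

Lemma Rmin_lip a b c d : Rabs (Rmin a b - Rmin c d) <= Rmax (Rabs (a - c)) (Rabs (b - d)).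
Proof.
unfold Rmin, Rmax; repeat destruct Rle_dec; unfold Rabs in *; repeat destruct Rcase_abs; lra.
Qed.

Definition Ef eps x := Rmax 0 (Rmin eps (1 - Rabs x)).

Lemma Ef_lip eps x y : Rabs (Ef eps x - Ef eps y) <= Rabs (x - y).
Proof.
unfold Ef, Rmin, Rmax; repeat destruct Rle_dec; unfold Rabs in *; repeat destruct Rcase_abs; lra.
Qed.

Lemma Ef_ge0 eps x : 0 <= Ef eps x.
Proof. unfold Ef, Rmax; destruct Rle_dec; lra. Qed.

Lemma halfk k a b : 0 <= k <= 1/2 -> a <= b -> 0 <= a -> k * a <= b / 2.
Proof. intros; nra. Qed.

Section Main.
Variables (V : finType) (adj : rel V) (tau : V -> R) (eps : R) (le : rel V).
Hypotheses (tau_nonneg : forall v, 0 <= tau v) (eps_pos : 0 < eps) (eps_le : eps <= 1/2)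
  (le_anti : antisymmetric le) (le_total : total le) (le_trans : transitive le).
Lemma mA_ge v h t x : t <= mA tau eps v h t x.
Proof.
unfold mA; destruct Rle_dec; simpl; [|lra].
rewrite fA_ef //.
assert (0 <= Rmin (tau v - t) (eps / 2)) by (unfold Rmin; destruct Rle_dec; lra).
assert (0 <= Rmax 0 (Rmin eps (1 - Rabs (x - h))) / eps).
{ unfold Rdiv; apply Rmult_le_pos; [apply (Ef_ge0 eps (x-h))|apply Rlt_le, Rinv_0_lt_compat; lra]. }
assert (0 <= Rmin (tau v - t) (eps / 2) * (Rmax 0 (Rmin eps (1 - Rabs (x - h))) / eps))
 by (apply Rmult_le_pos; lra).
lra.
Qed.

Lemma mA_lip v h t x y :
  Rabs (mA tau eps v h t x - mA tau eps v h t y) <= Rabs (x - y) / 2.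
Proof.
unfold mA; destruct Rle_dec; simpl.
2:{ replace (t - t) with 0 by ring; rewrite Rabs_R0; assert (0 <= Rabs (x-y)) by apply Rabs_pos; lra. }
rewrite !fA_ef //.
set c := Rmin (tau v - t) (eps / 2).
assert (0 <= c <= eps/2) by (unfold c, Rmin; destruct Rle_dec; lra).
set k := c / eps.
assert (Hc : c = k * eps) by (unfold k; field; lra).
assert (0 <= k <= 1/2) by nra.
have HE := Ef_lip eps (x - h) (y - h). unfold Ef in HE.
replace (c * (Rmax 0 (Rmin eps (1 - Rabs (x - h))) / eps) + t -
     (c * (Rmax 0 (Rmin eps (1 - Rabs (y - h))) / eps) + t))
  with (k * (Rmax 0 (Rmin eps (1 - Rabs (x - h))) - Rmax 0 (Rmin eps (1 - Rabs (y - h)))))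
  by (unfold k; field; lra).
replace (x - h - (y - h)) with (x - y) in HE by ring.
rewrite Rabs_mult (Rabs_pos_eq k); [|lra].
apply halfk; [lra|exact HE|apply Rabs_pos].
Qed.

Lemma mA_sym v h t x : mA tau eps v (-h) t (-x) = mA tau eps v h t x.
Proof.
unfold mA; destruct Rle_dec; simpl => //.
rewrite !fA_ef //. replace (-x - - h) with (- (x - h)) by ring. by rewrite Rabs_Ropp.
Qed.

Lemma le_refl' : reflexive le.
Proof. by move=> x; have := le_total x x; rewrite orbb. Qed.

Definition nextS (phi : V -> R) (S : stateA V) (p : V) : stateA V :=
  StateA (p :: placed S)
    (fun v h => if (v \in p :: placed S) || ~~ adj v p then taus S v h
                else Rmin (taus S v h) (mA tau eps v (phi p) (taus S p (phi p)) h))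
    (fun w => if w == p then taus S p (phi p) else sv S w).

Lemma next_elim phi S p : is_next le phi S p ->
  p \notin placed S /\ forall w, w \notin placed S ->
   taus S p (phi p) < taus S w (phi w) \/
   (taus S p (phi p) = taus S w (phi w) /\ le p w).
Proof.
move=> /andP[Hp /forallP F]; split => // w Hw.
move: (implyP (F w) Hw); rewrite /Rltb /Reqb.
case: Rlt_dec => h1; [by left|].
case: Req_EM_T => h2 /= H; [by right|done].
Qed.

Lemma next_intro phi S p : p \notin placed S -> (forall w, w \notin placed S ->
   taus S p (phi p) < taus S w (phi w) \/
   (taus S p (phi p) = taus S w (phi w) /\ le p w)) -> is_next le phi S p.
Proof.
move=> Hp F; apply/andP; split => //; apply/forallP => w; apply/implyP => Hw.
rewrite /Rltb /Reqb; case: (F w Hw) => [h|[h1 h2]].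
- by case: Rlt_dec.
- case: Rlt_dec => //= _; case: Req_EM_T => //= hn; by exfalso; apply hn.
Qed.

Lemma next_lb phi S p : is_next le phi S p ->
  forall w, w \notin placed S -> taus S p (phi p) <= taus S w (phi w).
Proof. move=> /next_elim[_ F] w Hw; case: (F w Hw) => [h|[h _]]; lra. Qed.

Lemma next_uniq phi S p q : is_next le phi S p -> is_next le phi S q -> p = q.
Proof.
move=> /next_elim[Hp Fp] /next_elim[Hq Fq].
case: (Fp q Hq) => [h1|[h1 h2]]; case: (Fq p Hp) => [h3|[h3 h4]]; try lra.
by apply: le_anti; rewrite h2 h4.
Qed.

Lemma exists_min (f : V -> R) (s : seq V) : s <> [::] ->
  exists p, p \in s /\ forall w, w \in s -> f p < f w \/ (f p = f w /\ le p w).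
Proof.
elim: s => [//|x s IH] _.
case: s IH => [|y s] IH.
- exists x; split; first by rewrite mem_head.
  move=> w; rewrite mem_seq1 => /eqP ->; right; split => //; exact: le_refl'.
- have [p [Hp Fp]] := IH (fun H => ltac:(discriminate)).
  have Htot : f x < f p \/ (f x = f p /\ le x p) \/ f p < f x \/ (f p = f x /\ le p x).
  { case: (Rtotal_order (f x) (f p)) => [h|[h|h]]; [by left| |by right; right; left].
    have := le_total x p; case/orP => h'; [right; left; by split|right; right; right; split => //; lra]. }
  case: Htot => [h|[[h1 h2]|[h|[h1 h2]]]].
  + exists x; split; first by rewrite mem_head.
    move=> w; rewrite in_cons => /orP[/eqP ->|Hw]; first by right; split => //; exact: le_refl'.
    case: (Fp w Hw) => [h'|[h' _]]; left; lra.
  + exists x; split; first by rewrite mem_head.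
    move=> w; rewrite in_cons => /orP[/eqP ->|Hw]; first by right; split => //; exact: le_refl'.
    case: (Fp w Hw) => [h'|[h' h'']]; first by left; lra.
    right; split; first lra. exact: le_trans h2 h''.
  + exists p; split; first by rewrite in_cons Hp orbT.
    move=> w; rewrite in_cons => /orP[/eqP ->|Hw]; first by left.
    exact: Fp.
  + exists p; split; first by rewrite in_cons Hp orbT.
    move=> w; rewrite in_cons => /orP[/eqP ->|Hw]; first by right.
    exact: Fp.
Qed.

Lemma exists_next phi S : (exists v, v \notin placed S) -> exists p, is_next le phi S p.
Proof.
move=> [v Hv].
have Hne : [seq w <- enum V | w \notin placed S] <> [::].
{ move=> H. have : v \in [seq w <- enum V | w \notin placed S] by rewrite mem_filter Hv mem_enum.
  by rewrite H. }
have [p [Hp Fp]] := exists_min (fun w => taus S w (phi w)) Hne.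
exists p; apply: next_intro.
- by move: Hp; rewrite mem_filter => /andP[].
- move=> w Hw; apply: Fp; by rewrite mem_filter Hw mem_enum.
Qed.

Lemma stepA_next phi S p : is_next le phi S p -> stepA adj tau eps le phi S = nextS phi S p.
Proof.
move=> Hp; rewrite /stepA; case: pickP => [q Hq|H].
- by rewrite (next_uniq Hq Hp).
- by move: (H p); rewrite Hp.
Qed.

Lemma stepA_none phi S : (forall p, ~~ is_next le phi S p) -> stepA adj tau eps le phi S = S.
Proof.
move=> H; rewrite /stepA; case: pickP => [q Hq|//].
by move: (H q); rewrite Hq.
Qed.

Lemma nextS_ext phi psi S p : phi p = psi p -> nextS phi S p = nextS psi S p.
Proof. by move=> E; rewrite /nextS E. Qed.

Lemma taus_next phi S p v x :
  taus (nextS phi S p) v x = taus S v x \/ taus S p (phi p) <= taus (nextS phi S p) v x.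
Proof.
rewrite /=; case: ifP => _; first by left.
have := mA_ge v (phi p) (taus S p (phi p)) x.
unfold Rmin; destruct Rle_dec; [left|right]; lra.
Qed.

Lemma taus_next_le phi S p v x : taus (nextS phi S p) v x <= taus S v x.
Proof.
rewrite /=; case: ifP => _; first lra.
unfold Rmin; destruct Rle_dec; lra.
Qed.

Definition Good (S : stateA V) :=
  (forall v x, 0 <= taus S v x <= tau v) /\
  (forall v x y, Rabs (taus S v x - taus S v y) <= Rabs (x - y) / 2).

Lemma Good_init : Good (initA tau).
Proof.
split => /= v x; first by have := tau_nonneg v; lra.
move=> y; replace (tau v - tau v) with 0 by ring; rewrite Rabs_R0.
have := Rabs_pos (x - y); lra.
Qed.

Lemma Good_next phi S p : Good S -> Good (nextS phi S p).
Proof.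
move=> [H1 H2]; split => v x /=.
- case: ifP => _; first exact: H1.
  have := mA_ge v (phi p) (taus S p (phi p)) x. have := H1 p (phi p). have := H1 v x.
  unfold Rmin; destruct Rle_dec; lra.
- move=> y; case: ifP => _; first exact: H2.
  eapply Rle_trans; [apply Rmin_lip|].
  unfold Rmax; destruct Rle_dec; [apply mA_lip|apply H2].
Qed.

Lemma Good_step phi S : Good S -> Good (stepA adj tau eps le phi S).
Proof.
move=> G.
case: (boolP [exists p, is_next le phi S p]) => [/existsP[p Hp]|/existsPn H].
- rewrite (stepA_next Hp); exact: Good_next.
- by rewrite stepA_none.
Qed.

Definition sq (Phi : stateA V -> V -> R) k :=
  iter k (fun S => stepA adj tau eps le (Phi S) S) (initA tau).

Lemma sqS Phi k : sq Phi k.+1 = stepA adj tau eps le (Phi (sq Phi k)) (sq Phi k).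
Proof. by []. Qed.

Lemma Good_sq Phi k : Good (sq Phi k).
Proof. elim: k => [|k IH]; [exact: Good_init|rewrite sqS; exact: Good_step]. Qed.

Lemma exists_unplaced (s : seq V) : uniq s -> (size s < #|V|)%nat -> exists v, v \notin s.
Proof.
move=> Hu Hs.
case: (boolP [exists v, v \notin s]) => [/existsP[v Hv]|/existsPn H]; first by exists v.
have : (#|V| <= size s)%nat.
{ rewrite cardE; apply: uniq_leq_size; first exact: enum_uniq.
  move=> v _; move: (H v); by rewrite negbK. }
by rewrite leqNgt Hs.
Qed.

Lemma all_placed (s : seq V) : uniq s -> size s = #|V| -> forall v, v \in s.
Proof.
move=> Hu Hs v; apply/negPn/negP => Hv.
have : uniq (v :: s) by rewrite /= Hv Hu.
move/card_uniqP => Hc. have := max_card (mem (v :: s)). by rewrite Hc /= Hs ltnn.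
Qed.

Lemma placed_sq Phi k : (k <= #|V|)%nat ->
  uniq (placed (sq Phi k)) /\ size (placed (sq Phi k)) = k.
Proof.
elim: k => [|k IH] Hk; first by [].
have [Hu Hs] := IH (ltnW Hk).
have Hex : exists v, v \notin placed (sq Phi k) by apply: (exists_unplaced Hu); rewrite Hs.
have [p Hp] := exists_next (Phi (sq Phi k)) Hex.
rewrite sqS (stepA_next Hp) /=.
have [Hp' _] := next_elim Hp.
by rewrite Hp' Hu Hs.
Qed.

Lemma nextP Phi k : (k < #|V|)%nat -> exists p, is_next le (Phi (sq Phi k)) (sq Phi k) p /\
   sq Phi k.+1 = nextS (Phi (sq Phi k)) (sq Phi k) p.
Proof.
move=> Hk; have [Hu Hs] := placed_sq Phi (ltnW Hk).
have Hex : exists v, v \notin placed (sq Phi k) by apply: (exists_unplaced Hu); rewrite Hs.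
have [p Hp] := exists_next (Phi (sq Phi k)) Hex.
exists p; split => //; by rewrite sqS (stepA_next Hp).
Qed.

Lemma step_mono phi S :
  {subset placed S <= placed (stepA adj tau eps le phi S)} /\
  (forall w, w \in placed S -> sv (stepA adj tau eps le phi S) w = sv S w) /\
  (forall v x, taus (stepA adj tau eps le phi S) v x <= taus S v x).
Proof.
case: (boolP [exists p, is_next le phi S p]) => [/existsP[p Hp]|/existsPn H].
- rewrite (stepA_next Hp); have [Hp' _] := next_elim Hp; split; [|split].
  + move=> w Hw /=; by rewrite in_cons Hw orbT.
  + move=> w Hw /=; case: eqP => // E; by move: Hp'; rewrite -E Hw.
  + exact: taus_next_le.
- rewrite stepA_none //; split; [by []|split => //]; move=> *; lra.
Qed.

Lemma sq_mono Phi k n :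
  {subset placed (sq Phi k) <= placed (sq Phi (k + n))} /\
  (forall w, w \in placed (sq Phi k) -> sv (sq Phi (k + n)) w = sv (sq Phi k) w) /\
  (forall v x, taus (sq Phi (k + n)) v x <= taus (sq Phi k) v x).
Proof.
elim: n => [|n [I1 [I2 I3]]]; first by rewrite addn0; split; [by []|split => //]; move=> *; lra.
rewrite addnS sqS; have [J1 [J2 J3]] := step_mono (Phi (sq Phi (k + n))) (sq Phi (k + n)).
split; [|split].
- move=> w Hw; apply: J1; exact: I1.
- move=> w Hw; rewrite J2; [exact: I2|exact: I1].
- move=> v x; apply: Rle_trans (J3 v x) (I3 v x).
Qed.

Lemma svF_next Phi k p : (k < #|V|)%nat -> is_next le (Phi (sq Phi k)) (sq Phi k) p ->
  sv (sq Phi #|V|) p = taus (sq Phi k) p (Phi (sq Phi k) p).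
Proof.
move=> Hk Hp; have [q [Hq Hst]] := nextP Phi Hk.
rewrite -(next_uniq Hq Hp) in Hst *.
have [_ [Hsv _]] := sq_mono Phi k.+1 (#|V| - k.+1).
rewrite subnKC // in Hsv.
rewrite Hsv; last by rewrite Hst /= mem_head.
by rewrite Hst /= eqxx.
Qed.

Lemma placement Phi k w : (k <= #|V|)%nat -> w \notin placed (sq Phi k) ->
  exists j, (k <= j)%nat /\ (j < #|V|)%nat /\ is_next le (Phi (sq Phi j)) (sq Phi j) w /\
    sv (sq Phi #|V|) w = taus (sq Phi j) w (Phi (sq Phi j) w).
Proof.
suff: forall n k, (k + n = #|V|)%nat -> w \notin placed (sq Phi k) ->
   exists j, (k <= j)%nat /\ (j < #|V|)%nat /\ is_next le (Phi (sq Phi j)) (sq Phi j) w /\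
    sv (sq Phi #|V|) w = taus (sq Phi j) w (Phi (sq Phi j) w).
{ move=> H Hk Hw; apply: (H (#|V| - k)%nat k _ Hw); by rewrite subnKC. }
elim=> [|n IH] {}k Hkn Hw.
- rewrite addn0 in Hkn; subst k. have [Hu Hs] := placed_sq Phi (leqnn _).
  by rewrite (all_placed Hu Hs) in Hw.
- have Hk : (k < #|V|)%nat by rewrite -Hkn addnS ltnS leq_addr.
  have [p [Hp Hst]] := nextP Phi Hk.
  case: (eqVneq w p) => [->|Hwp].
  + exists k; split; [by rewrite leqnn|split => //; split => //].
    exact: svF_next.
  + have Hw' : w \notin placed (sq Phi k.+1) by rewrite Hst /= in_cons negb_or Hwp Hw.
    have Hkn' : (k.+1 + n = #|V|)%nat by rewrite addSnnS.
    have [j [Hj1 Hj2]] := IH k.+1 Hkn' Hw'.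
    exists j; split => //; exact: ltnW.
Qed.

Definition LB Phi k a := forall u, u \notin placed (sq Phi k) ->
  a <= taus (sq Phi k) u (Phi (sq Phi k) u).

Definition Hstep Phi := forall k u, (k < #|V|)%nat ->
  taus (sq Phi k.+1) u (Phi (sq Phi k.+1) u) = taus (sq Phi k) u (Phi (sq Phi k.+1) u) ->
  taus (sq Phi k) u (Phi (sq Phi k) u) <= taus (sq Phi k.+1) u (Phi (sq Phi k.+1) u).

Lemma LB_step Phi k a : Hstep Phi -> (k < #|V|)%nat -> LB Phi k a -> LB Phi k.+1 a.
Proof.
move=> HS Hk HL u Hu.
have [p [Hp Hst]] := nextP Phi Hk.
have Hu0 : u \notin placed (sq Phi k).
{ move: Hu; rewrite Hst /= in_cons negb_or => /andP[]//. }
have Hpa : a <= taus (sq Phi k) p (Phi (sq Phi k) p).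
{ apply: HL; by have [] := next_elim Hp. }
case: (taus_next (Phi (sq Phi k)) (sq Phi k) p u (Phi (sq Phi k.+1) u)); rewrite -Hst => E.
- have := HS k u Hk E; have := HL u Hu0; lra.
- lra.
Qed.

Lemma LB_mono Phi k n a : Hstep Phi -> (k + n <= #|V|)%nat -> LB Phi k a -> LB Phi (k + n) a.
Proof.
move=> HS; elim: n => [|n IH] Hkn HL; first by rewrite addn0.
rewrite addnS; apply: LB_step => //; first by rewrite -addnS.
apply: IH => //; by rewrite ltnW // -addnS.
Qed.

Lemma Good_mono S v x y : Good S -> x + taus S v x <= y + taus S v y -> x <= y.
Proof.
move=> [_ H2] Hxy. destruct (Rle_lt_dec x y) as [h|h] => //.
have := H2 v x y. unfold Rabs; repeat destruct Rcase_abs; lra.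
Qed.

Lemma Good_inj S v x y : Good S -> x + taus S v x = y + taus S v y -> x = y.
Proof.
move=> G E; apply: Rle_antisym; apply: (Good_mono (v:=v) G); lra.
Qed.

Lemma sol_exists S v c : Good S -> exists x, x + taus S v x = c.
Proof.
move=> [H1 H2].
have Hc : continuity (fun x => x + taus S v x - c).
{ move=> x0; unfold continuity_pt, continue_in, limit1_in, limit_in => e He.
  exists (e/2); split; first lra.
  move=> x [_ Hx]; simpl in *; unfold R_dist in *.
  have := H2 v x x0. move: Hx. unfold Rabs; repeat destruct Rcase_abs; lra. }
have [z [_ Hz]] := IVT _ (c - tau v - 1) (c + 1) Hc
  (ltac:(have := tau_nonneg v; lra))
  (ltac:(have := H1 v (c - tau v - 1); lra))
  (ltac:(have := H1 v (c + 1); lra)).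
exists z; lra.
Qed.

Definition hsol (psi : V -> R) (S : stateA V) (v : V) : R :=
  epsilon (inhabits 0) (fun x => x + taus S v x = psi v).

Lemma hsol_spec psi S v : Good S -> hsol psi S v + taus S v (hsol psi S v) = psi v.
Proof. move=> G; apply: (epsilon_spec (inhabits 0) (fun x => x + taus S v x = psi v)); exact: sol_exists. Qed.

Lemma hsol_uniq psi S v x : Good S -> x + taus S v x = psi v -> x = hsol psi S v.
Proof. move=> G E; apply: (Good_inj (v:=v) G); by rewrite E hsol_spec. Qed.

Lemma Hstep_fixed phi : Hstep (fun _ => phi).
Proof. move=> k u _ /= E; rewrite E; lra. Qed.

Lemma Hstep_recon psi : Hstep (hsol psi).
Proof.
move=> k u _ E.
set x := hsol psi (sq (hsol psi) k.+1) u in E *.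
have Hx : x = hsol psi (sq (hsol psi) k) u.
{ apply: hsol_uniq; first exact: Good_sq. rewrite -E /x; apply: hsol_spec; exact: Good_sq. }
rewrite -Hx E; lra.
Qed.

Lemma fixed_recon phi k : (k <= #|V|)%nat ->
  sq (fun _ => phi) k = sq (hsol (fun v => phi v + sv (sq (fun _ => phi) #|V|) v)) k.
Proof.
set F := sq (fun _ => phi) #|V|.
set chi := fun v => phi v + sv F v.
elim: k => [//|k IH] Hk.
have IHk := IH (ltnW Hk).
have [p [Hp Hst]] := nextP (fun _ => phi) Hk.
have HpF := svF_next Hk Hp.
rewrite Hst sqS -IHk.
set S := sq (fun _ => phi) k in Hp Hst HpF *.
have G : Good S by exact: Good_sq.
have [Hp0 Hpmin] := next_elim Hp.
have Hplb := next_lb Hp.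
cbv beta in Hpmin; cbv beta in Hplb; cbv beta in HpF.
have hp : phi p = hsol chi S p.
{ apply: hsol_uniq G _; by rewrite /chi -/F HpF. }
have Hnext : is_next le (hsol chi S) S p.
{ apply: next_intro => // w Hw.
  have [j [Hj1 [Hj2 [Hjn Hjsv]]]] := placement (Phi := fun _ => phi) (ltnW Hk) Hw.
  have [_ [_ Hup]] := sq_mono (fun _ => phi) k (j - k).
  rewrite subnKC // in Hup.
  have HL := LB_mono (k := k) (n := (j - k)%nat) (a := taus S p (phi p)) (Hstep_fixed (phi:=phi)).
  rewrite subnKC // in HL.
  have HL' := HL (ltnW Hj2) Hplb.
  have [Hjw _] := next_elim Hjn.
  have Hlow := HL' w Hjw.
  cbv beta in Hjsv; cbv beta in Hlow.
  rewrite -/F in Hjsv.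
  have Hup' := Hup w (phi w). rewrite -/S in Hup'.
  set y := hsol chi S w.
  have Hy : y + taus S w y = chi w by apply: hsol_spec.
  have Hyle : y <= phi w.
  { apply: (Good_mono (v := w) G); rewrite Hy /chi /=; lra. }
  rewrite -hp.
  destruct (Rlt_or_le (taus S p (phi p)) (taus S w y)) as [h|h]; first by left.
  have Hyw : y = phi w by move: Hy; rewrite /chi; lra.
  case: (Hpmin w Hw) => [h'|[h' h'']]; rewrite -Hyw in h' *; first lra.
  right; split => //. }
by rewrite (stepA_next Hnext) (nextS_ext _ hp).
Qed.

Lemma recon_fixed psi k : (k <= #|V|)%nat ->
  sq (fun _ v => psi v - sv (sq (hsol psi) #|V|) v) k = sq (hsol psi) k.
Proof.
set RF := sq (hsol psi) #|V|.
set ps := fun v => psi v - sv RF v.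
elim: k => [//|k IH] Hk.
have IHk := IH (ltnW Hk).
have [p [Hp Hst]] := nextP (hsol psi) Hk.
have HpF := svF_next Hk Hp.
rewrite Hst sqS IHk.
set S := sq (hsol psi) k in Hp Hst HpF *.
cbv beta.
have G : Good S by exact: Good_sq.
have [Hp0 Hpmin] := next_elim Hp.
have Hplb := next_lb Hp.
have hp : ps p = hsol psi S p.
{ have := hsol_spec psi p G. rewrite /ps -/RF HpF. lra. }
have Hnext : is_next le ps S p.
{ apply: next_intro => // w Hw.
  have [j [Hj1 [Hj2 [Hjn Hjsv]]]] := placement (Phi := hsol psi) (ltnW Hk) Hw.
  have Gj : Good (sq (hsol psi) j) by exact: Good_sq.
  have Hsj := hsol_spec psi w Gj.
  rewrite -/RF in Hjsv.
  have Hpsw : ps w = hsol psi (sq (hsol psi) j) w by rewrite /ps; lra.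
  have [_ [_ Hup]] := sq_mono (hsol psi) k (j - k).
  rewrite subnKC // in Hup.
  have HL := LB_mono (k := k) (n := (j - k)%nat) (a := taus S p (hsol psi S p)) (Hstep_recon (psi:=psi)).
  rewrite subnKC // in HL.
  have HL' := HL (ltnW Hj2) Hplb.
  have [Hjw _] := next_elim Hjn.
  have Hlow := HL' w Hjw.
  have Hup' := Hup w (ps w). rewrite -/S in Hup'.
  rewrite hp.
  rewrite -Hjsv in Hlow.
  rewrite {1}Hpsw -Hjsv in Hup'.
  destruct (Rlt_or_le (taus S p (hsol psi S p)) (taus S w (ps w))) as [h|h]; first by left.
  have Hy : ps w = hsol psi S w.
  { apply: hsol_uniq G _. rewrite /ps in Hup' h *; lra. }
  case: (Hpmin w Hw) => [h'|[h' h'']]; rewrite -Hy in h' *; first lra.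
  right; split => //. }
by rewrite (stepA_next Hnext) (nextS_ext _ hp).
Qed.

Definition negS (S : stateA V) : stateA V :=
  StateA (placed S) (fun v h => taus S v (- h)) (sv S).

Lemma next_neg phi S p : is_next le (fun v => - phi v) (negS S) p = is_next le phi S p.
Proof.
apply/idP/idP => H.
- have [H0 H1] := next_elim H; apply: next_intro => // w Hw.
  have := H1 w Hw; rewrite /= !Ropp_involutive //.
- have [H0 H1] := next_elim H; apply: next_intro => // w Hw.
  have := H1 w Hw; rewrite /= !Ropp_involutive //.
Qed.

Lemma sym_sq phi k : sq (fun _ v => - phi v) k = negS (sq (fun _ => phi) k).
Proof.
elim: k => [//|k IH].
rewrite !sqS IH; cbv beta.
set S := sq (fun _ => phi) k.
case: (boolP [exists p, is_next le phi S p]) => [/existsP[p Hp]|/existsPn H].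
- have Hp' : is_next le (fun v => - phi v) (negS S) p by rewrite next_neg.
  rewrite (stepA_next Hp) (stepA_next Hp') /nextS /negS /=.
  rewrite Ropp_involutive; f_equal.
  apply: functional_extensionality => v; apply: functional_extensionality => h.
  case: ifP => // _.
  have := mA_sym v (phi p) (taus S p (phi p)) (- h). rewrite Ropp_involutive => ->. done.
- rewrite !stepA_none // => p; rewrite next_neg; exact: H.
Qed.

Lemma runA_eq phi : runA adj tau eps le phi = sq (fun _ => phi) #|V|.
Proof. by []. Qed.

Lemma Tplus_inj phi psi : Tplus adj tau eps le phi =1 Tplus adj tau eps le psi -> phi =1 psi.
Proof.
move=> E.
have Hchi : (fun v => phi v + sv (sq (fun _ => phi) #|V|) v) =
            (fun v => psi v + sv (sq (fun _ => psi) #|V|) v).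
{ apply: functional_extensionality => v; exact: E. }
have A := fixed_recon phi (leqnn #|V|).
have B := fixed_recon psi (leqnn #|V|).
rewrite Hchi -B in A.
move=> v; have := E v; rewrite /Tplus !runA_eq A. lra.
Qed.

Lemma Tplus_surj psi : exists phi, Tplus adj tau eps le phi =1 psi.
Proof.
exists (fun v => psi v - sv (sq (hsol psi) #|V|) v) => v.
rewrite /Tplus runA_eq (recon_fixed psi (leqnn _)). lra.
Qed.

Lemma Tminus_eq phi : Tminus adj tau eps le phi =1
  (fun v => - Tplus adj tau eps le (fun w => - phi w) v).
Proof.
move=> v; rewrite /Tminus /Tplus !runA_eq sym_sq /=. lra.
Qed.
End Main.

Theorem mainTheorem7 (V : finType) (adj : rel V) (tau : V -> R) (eps : R) (le : rel V)
  (adj_sym : symmetric adj) (adj_irr : irreflexive adj)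
  (adj_conn : forall x y : V, connect adj x y)
  (tau_nonneg : forall v, 0 <= tau v)
  (eps_pos : 0 < eps) (eps_le : eps <= 1 / 2)
  (le_refl : reflexive le) (le_anti : antisymmetric le)
  (le_trans : transitive le) (le_total : total le) :
  ((forall phi psi : V -> R,
      Tplus adj tau eps le phi =1 Tplus adj tau eps le psi -> phi =1 psi) /\
   (forall psi : V -> R, exists phi : V -> R, Tplus adj tau eps le phi =1 psi)) /\
  ((forall phi psi : V -> R,
      Tminus adj tau eps le phi =1 Tminus adj tau eps le psi -> phi =1 psi) /\
   (forall psi : V -> R, exists phi : V -> R, Tminus adj tau eps le phi =1 psi)) /\
  (forall phi : V -> R,
      Tminus adj tau eps le phi =1 (fun v => - Tplus adj tau eps le (fun w => - phi w) v)).
Proof.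
have Hinj := Tplus_inj (adj:=adj) tau_nonneg eps_pos eps_le le_anti le_total le_trans.
have Hsurj := Tplus_surj adj tau_nonneg eps_pos eps_le le_anti le_total le_trans.
have Hm := Tminus_eq adj tau eps_pos eps_le le_anti.
split; [by split|split; [split|exact: Hm]].
- move=> phi psi E.
  have E' : Tplus adj tau eps le (fun w => - phi w) =1 Tplus adj tau eps le (fun w => - psi w).
  { move=> v; have := E v; rewrite !Hm; lra. }
  move=> v; have := Hinj _ _ E' v; lra.
- move=> psi; have [phi Hphi] := Hsurj (fun v => - psi v).
  exists (fun w => - phi w) => v; rewrite Hm.
  have -> : (fun w => - - phi w) = phi by apply: functional_extensionality => w; lra.
  rewrite Hphi; lra.
Qed.
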